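(* For every fixed integer $k\geq 0$ there exist constants $q^*_k$ and $C^*_k$ (depending only on $k$) such that for all integers $q\geq q^*_k$, $$\frac{2^q}{\binom{q}{\leq k}} \;\leq\; F^*_k(q)\;\leq\; \frac{2^q}{\binom{q}{\leq k}}+C^*_k .$$
   Context: Pathological liar game: fix integers $q,k\geq 0$. A state is a vector $\vec{x}=(x_0,\ldots,x_k)$ of nonnegative integers ($x_i$ = number of elements currently carrying $i$ lies; elements with $k+1$ lies are discarded). In each of $q$ rounds Paul chooses a legal question $\vec{a}=(a_0,\ldots,a_k)$ with integers $0\leq a_i\leq x_i$, and Carole answers Y or N; the new state is $Y(\vec{x},\vec{a})=(a_0,\,a_1+x_0-a_0,\,\ldots,\,a_k+x_{k-1}-a_{k-1})$ or $N(\vec{x},\vec{a})=(x_0-a_0,\,x_1-a_1+a_0,\,\ldots,\,x_k-a_k+a_{k-1})$ respectively. Paul wins the pathological game iff after $q$ rounds the state satisfies $\sum_{i=0}^k x_i\geq 1$. $F^*_k(q)$ denotes the minimum $n$ such that Paul has a winning strategy in the $q$-round pathological liar game with $k$ lies and initial state $(n,0,\ldots,0)$. Notation: $\binom{q}{\leq m}=\sum_{j=0}^m\binom{q}{j}$. *)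

(* Defs.v *)
From mathcomp Require Import all_boot all_order all_algebra.
Set Implicit Arguments. Unset Strict Implicit. Unset Printing Implicit Defensive.

(* A state / question of the pathological liar game with k lies:
   a vector (x_0, ..., x_k) of natural numbers. *)
Definition lstate (k : nat) := {ffun 'I_k.+1 -> nat}.

Definition comp k (x : lstate k) (j : nat) : nat := x (inord j).

Definition legal k (x a : lstate k) : Prop := forall i : 'I_k.+1, a i <= x i.

Definition Yans k (x a : lstate k) : lstate k :=
  [ffun i : 'I_k.+1 => if val i == 0 then a i
                       else a i + (comp x (val i).-1 - comp a (val i).-1)].

Definition Nans k (x a : lstate k) : lstate k :=
  [ffun i : 'I_k.+1 => if val i == 0 then x i - a i
                       else (x i - a i) + comp a (val i).-1].

(* Paul wins the q-round pathological game from state x: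
   after q rounds, whatever Carole answers, sum_i x_i >= 1. *)
Fixpoint pwin k (q : nat) (x : lstate k) : Prop :=
  match q with
  | 0 => 1 <= \sum_(i < k.+1) x i
  | q'.+1 => exists a : lstate k,
      legal x a /\ pwin q' (Yans x a) /\ pwin q' (Nans x a)
  end.

Definition init_state k (n : nat) : lstate k :=
  [ffun i : 'I_k.+1 => if val i == 0 then n else 0].

Definition is_Fstar (k q n : nat) : Prop :=
  pwin q (init_state k n) /\ forall m, m < n -> ~ pwin q (init_state k m).

Definition binom_le (q m : nat) : nat := \sum_(j < m.+1) 'C(q, j).

(* Main.v *)
Require Import Defs.
From mathcomp Require Import all_boot all_order all_algebra.
From mathcomp Require Import zify.
From Stdlib Require Import Classical.
Set Implicit Arguments. Unset Strict Implicit. Unset Printing Implicit Defensive.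
Local Notation comp := Defs.comp.

Notation B := binom_le.

Lemma B0 j : B j 0 = 1.
Proof. by rewrite /binom_le big_ord_recl big_ord0 bin0. Qed.

Lemma B_pascal j m : B j.+1 m.+1 = B j m.+1 + B j m.
Proof.
rewrite /binom_le big_ord_recl bin0.
rewrite (eq_bigr (fun l : 'I_m.+1 => 'C(j, l.+1) + 'C(j, l))); last first.
  by move=> i _; rewrite /= binS.
rewrite big_split /= addnA; congr (_ + _).
by rewrite [in RHS]big_ord_recl bin0.
Qed.

Lemma B_ge1 j m : 1 <= B j m.
Proof. by rewrite /binom_le big_ord_recl bin0 leq_addr. Qed.

Lemma B_S j m : B j m.+1 = B j m + 'C(j, m.+1).
Proof. by rewrite /binom_le big_ord_recr. Qed.

Lemma B_monom j m m' : m <= m' -> B j m <= B j m'.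
Proof.
elim: m' => [|m' IH]; first by rewrite leqn0 => /eqP->.
rewrite leq_eqVlt => /orP[/eqP->//|]; rewrite ltnS => /IH h.
by rewrite B_S (leq_trans h) // leq_addr.
Qed.

Lemma B_monoj j j' m : j <= j' -> B j m <= B j' m.
Proof.
move=> h; rewrite /binom_le; apply: leq_sum => i _; exact: leq_bin2l.
Qed.

Lemma shift_sum k j (f : nat -> nat) :
  \sum_(i < k.+1) (f i + (if (i:nat) is i'.+1 then f i' else 0)) * B j (k - i) =
  \sum_(i < k.+1) f i * B j.+1 (k - i).
Proof.
have e1 : forall i : 'I_k.+1, (f i + (if (i:nat) is i'.+1 then f i' else 0)) * B j (k - i) =
   f i * B j (k - i) + (if (i:nat) is i'.+1 then f i' else 0) * B j (k - i).
  by move=> i; rewrite mulnDl.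
have e2 : forall i : 'I_k.+1, f i * B j.+1 (k - i) = f i * B j (k - i) +
   (if (i : nat) < k then f i * B j (k - i).-1 else 0).
  move=> [i hi] /=; case: ltnP => hik.
    have e : k - i = (k - i.+1).+1 by lia.
    by rewrite e B_pascal mulnDr.
  have -> : k - i = 0 by lia.
  by rewrite !B0 addn0.
rewrite (eq_bigr _ (fun i _ => e1 i)) (eq_bigr _ (fun i _ => e2 i)) !big_split /=.
congr (_ + _).
rewrite big_ord_recl /= add0n big_ord_recr /= ltnn addn0.
apply: eq_bigr => i _; rewrite /= ltn_ord add0n /bump leq0n add1n subnS.
by [].
Qed.

Section S.
Variable k : nat.

Lemma val_inord i : i <= k -> \val (inord i : 'I_k.+1) = i.
Proof. exact: inordK. Qed.

Definition W j (x : lstate k) := \sum_(i < k.+1) comp x i * B j (k - i).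

Lemma comp_ord (x : lstate k) (i : 'I_k.+1) : comp x i = x i.
Proof. by rewrite /comp inord_val. Qed.

Lemma compY (x a : lstate k) i : i <= k ->
  comp (Yans x a) i = if i is i'.+1 then comp a i + (comp x i' - comp a i') else comp a 0.
Proof. by move=> hi; rewrite /comp ffunE val_inord //; case: i hi. Qed.

Lemma compN (x a : lstate k) i : i <= k ->
  comp (Nans x a) i = if i is i'.+1 then (comp x i - comp a i) + comp a i' else comp x 0 - comp a 0.
Proof. by move=> hi; rewrite /comp ffunE val_inord //; case: i hi. Qed.

Lemma legal_comp (x a : lstate k) i : legal x a -> i <= k -> comp a i <= comp x i.
Proof. by move=> h hi; rewrite /comp; apply: h. Qed.

Definition mkq (g : nat -> nat) : lstate k := [ffun i : 'I_k.+1 => g (val i)].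

Lemma comp_mkq g i : i <= k -> comp (mkq g) i = g i.
Proof. by move=> hi; rewrite /comp ffunE val_inord. Qed.

Lemma legal_mkq (x : lstate k) g : (forall i, i <= k -> g i <= comp x i) -> legal x (mkq g).
Proof. move=> h i; rewrite ffunE -comp_ord; apply: h; exact: ltn_ord i. Qed.

Lemma state_ext (x y : lstate k) : (forall i, i <= k -> comp x i = comp y i) -> x = y.
Proof. move=> h; apply/ffunP => i; rewrite -!comp_ord; apply: h; exact: ltn_ord i. Qed.

Lemma Bzero m : B 0 m = 1.
Proof. elim: m => [|m IH]; first exact: B0. by rewrite B_S IH bin0n. Qed.

Lemma W0 x : W 0 x = \sum_(i < k.+1) x i.
Proof. by apply: eq_bigr => i _; rewrite Bzero muln1 comp_ord. Qed.

Lemma conservation j (x a : lstate k) : legal x a ->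
  W j (Yans x a) + W j (Nans x a) = W j.+1 x.
Proof.
move=> hl; rewrite /W -big_split /= -(shift_sum k j (comp x)).
apply: eq_bigr => [[i hi]] _ /=; rewrite -mulnDl; congr (_ * _).
have hik : i <= k by [].
rewrite compY // compN //; case: i hi hik => [|i] hi hik.
  have := legal_comp hl (leq0n k); lia.
have := legal_comp hl hik; have := legal_comp hl (ltnW hik); lia.
Qed.

Lemma lower_bound j (x : lstate k) : pwin j x -> 2 ^ j <= W j x.
Proof.
elim: j x => [|j IH] x /=; first by rewrite W0 expn0.
move=> [a [hl [hY hN]]]; rewrite -(conservation j hl) expnS mul2n -addnn.
exact: leq_add (IH _ hY) (IH _ hN).
Qed.

Lemma comp_init n i : i <= k -> comp (init_state k n) i = if i == 0 then n else 0.
Proof. by move=> hi; rewrite /comp ffunE val_inord. Qed.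

Lemma W_init j n : W j (init_state k n) = n * B j k.
Proof.
rewrite /W big_ord_recl comp_init //= subn0 big1 ?addn0 // => i _.
by rewrite comp_init //; exact: ltn_ord.
Qed.

End S.

Fixpoint hd (s t : seq bool) : nat :=
  match s, t with x :: s', y :: t' => (x != y) + hd s' t' | _, _ => 0 end.

Definition el := (nat * seq bool)%type.

Definition far (e f : el) := e.1 + f.1 < hd e.2 f.2.
Definition hb (e : el) := head false e.2.
Definition aliveY (e : el) := hb e || (0 < e.1).
Definition aliveN (e : el) := ~~ hb e || (0 < e.1).
Definition stepY (e : el) : el := (if hb e then e.1 else e.1.-1, behead e.2).
Definition stepN (e : el) : el := (if hb e then e.1.-1 else e.1, behead e.2).
Definition TY (T : seq el) := map stepY (filter aliveY T).
Definition TN (T : seq el) := map stepN (filter aliveN T).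
Definition WT j (T : seq el) := \sum_(e <- T) B j e.1.

Lemma countE (T : eqType) (a : pred T) (s : seq T) : count a s = \sum_(x <- s) (a x : nat).
Proof. by elim: s => [|x s IH]; rewrite ?big_nil ?big_cons //= IH. Qed.

Lemma WT_split j T : WT j.+1 T = WT j (TY T) + WT j (TN T).
Proof.
rewrite /WT /TY /TN !big_map !big_filter (big_mkcond aliveY) (big_mkcond aliveN) -big_split /=.
apply: eq_bigr => [[r c]] _; rewrite /aliveY /aliveN /stepY /stepN /=.
case: (hb (r, c)); case: r => [|r] /=; rewrite ?B0 ?B_pascal ?addn0 //.
by rewrite addnC.
Qed.

Section T.
Variable k : nat.

Definition okT j (T : seq el) :=
  all (fun e : el => (e.1 <= k) && (size e.2 == j)) T && pairwise far T.

Lemma okT_Y j T : okT j.+1 T -> okT j (TY T).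
Proof.
move=> /andP[hall hpw]; apply/andP; split.
  apply/allP => e' /mapP [e]; rewrite mem_filter => /andP [_ he] ->.
  move/allP: hall => /(_ e he) /andP [h1 h2]; rewrite /stepY /=.
  rewrite size_behead (eqP h2) /= eqxx andbT; case: (hb e) => //; exact: leq_trans (leq_pred _) h1.
rewrite /TY pairwise_map.
apply: (@sub_in_pairwise _ [pred e : el | aliveY e && (size e.2 == j.+1)] far).
- move=> [r c] [r' c']; rewrite !inE /aliveY /hb /far /= => /andP [a1 /eqP s1] /andP [a2 /eqP s2].
  case: c s1 a1 => [|x s] //= _; case: c' s2 a2 => [|y s'] //= _ a1 a2.
  move: a1 a2; case: x; case: y => /=; lia.
- apply/allP => e; rewrite mem_filter inE => /andP [-> he] /=.
  by move/allP: hall => /(_ e he) /andP [].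
- exact: pairwise_filter.
Qed.

Lemma okT_N j T : okT j.+1 T -> okT j (TN T).
Proof.
move=> /andP[hall hpw]; apply/andP; split.
  apply/allP => e' /mapP [e]; rewrite mem_filter => /andP [_ he] ->.
  move/allP: hall => /(_ e he) /andP [h1 h2]; rewrite /stepN /=.
  rewrite size_behead (eqP h2) /= eqxx andbT; case: (hb e) => //; exact: leq_trans (leq_pred _) h1.
rewrite /TN pairwise_map.
apply: (@sub_in_pairwise _ [pred e : el | aliveN e && (size e.2 == j.+1)] far).
- move=> [r c] [r' c']; rewrite !inE /aliveN /hb /far /= => /andP [a1 /eqP s1] /andP [a2 /eqP s2].
  case: c s1 a1 => [|x s] //= _; case: c' s2 a2 => [|y s'] //= _ a1 a2.
  move: a1 a2; case: x; case: y => /=; lia.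
- apply/allP => e; rewrite mem_filter inE => /andP [-> he] /=.
  by move/allP: hall => /(_ e he) /andP [].
- exact: pairwise_filter.
Qed.

Lemma packing j T : okT j T -> WT j T <= 2 ^ j.
Proof.
elim: j T => [|j IH] T hT.
  case: T hT => [|e [|e' T]]; rewrite /WT ?big_nil ?big_cons ?big_nil ?Bzero //.
  move=> /andP [ha hp]; move: ha => /= /and3P [/andP [_ /eqP s1] /andP [_ /eqP s2] _].
  move: hp => /= /andP [/andP [hf _] _]; move: hf; rewrite /far.
  by case: (e.2) s1 => //; case: (e'.2) s2.
rewrite WT_split expnS mul2n -addnn.
exact: leq_add (IH _ (okT_Y hT)) (IH _ (okT_N hT)).
Qed.

End T.

Section E.
Variable k : nat.

Definition V (T : seq el) (p i : nat) : nat := count (fun e : el => k - e.1 == i) T + (i == k) * p.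
Definition AQ (T : seq el) (pY i : nat) : nat := count (fun e : el => (k - e.1 == i) && hb e) T + (i == k) * pY.
Definition CN (T : seq el) (i : nat) : nat := count (fun e : el => (k - e.1 == i) && ~~ hb e) T.

Lemma count_TY (a : pred el) T : count a (TY T) = \sum_(e <- T) (aliveY e && a (stepY e) : nat).
Proof. rewrite /TY count_map count_filter countE; apply: eq_bigr => e _ /=; by rewrite andbC. Qed.
Lemma count_TN (a : pred el) T : count a (TN T) = \sum_(e <- T) (aliveN e && a (stepN e) : nat).
Proof. rewrite /TN count_map count_filter countE; apply: eq_bigr => e _ /=; by rewrite andbC. Qed.

Lemma count_split (T0 : Type) (a b : pred T0) s :
  count a s = count (fun x => a x && b x) s + count (fun x => a x && ~~ b x) s.
Proof. elim: s => [|x s IH] //=; rewrite IH; case: (a x); case: (b x) => /=; lia. Qed.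

Lemma V_sub T (p pY i : nat) : pY <= p -> V T p i - AQ T pY i = CN T i + (i == k) * (p - pY).
Proof.
move=> hp; rewrite /V /AQ /CN (count_split _ hb).
case: (i == k); lia.
Qed.

Definition allk (T : seq el) := all (fun e : el => e.1 <= k) T.

Lemma Y_vec T p pY : allk T -> forall i, i <= k ->
  comp (Yans (mkq k (V T p)) (mkq k (AQ T pY))) i = V (TY T) pY i.
Proof.
move=> hT i hi; rewrite compY //; case: i hi => [|i] hi.
  rewrite comp_mkq // /AQ /V count_TY countE; congr (_ + _).
  apply: eq_big_seq => e he; move/allP: hT => /(_ e he).
  rewrite /aliveY /stepY; case: e he => r c /= _; case: (hb (r, c)) => /=; lia.
rewrite !comp_mkq; try lia.
have hik : (i == k) = false by apply/negbTE; lia.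
rewrite /AQ /V hik !mul0n !addn0 (count_split (fun e : el => k - e.1 == i) hb) addKn.
rewrite count_TY !countE addnAC -big_split; congr (_ + _).
apply: eq_big_seq => e he; move/allP: hT => /(_ e he).
rewrite /aliveY /stepY; case: e he => r c /= _; case: (hb (r, c)) => /=; lia.
Qed.

Lemma N_vec T p pY : allk T -> pY <= p -> forall i, i <= k ->
  comp (Nans (mkq k (V T p)) (mkq k (AQ T pY))) i = V (TN T) (p - pY) i.
Proof.
move=> hT hp i hi; rewrite compN //; case: i hi => [|i] hi.
  rewrite !comp_mkq // V_sub // /CN /V count_TN !countE; congr (_ + _).
  apply: eq_big_seq => e he; move/allP: hT => /(_ e he).
  rewrite /aliveN /stepN; case: e he => r c /= _; case: (hb (r, c)) => /=; lia.
rewrite !comp_mkq; try lia.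
have hik : (i == k) = false by apply/negbTE; lia.
rewrite V_sub // /AQ /CN /V hik !mul0n !addn0.
rewrite count_TN !countE addnAC -big_split; congr (_ + _).
apply: eq_big_seq => e he; move/allP: hT => /(_ e he).
rewrite /aliveN /stepN; case: e he => r c /= _; case: (hb (r, c)) => /=; lia.
Qed.

End E.

Section E2.
Variable k : nat.

Lemma sum_eq1 r : \sum_(i < k.+1) ((k - r == i) : nat) = 1.
Proof.
have hi : k - r < k.+1 by lia.
rewrite (bigD1 (Ordinal hi)) //= eqxx big1 // => i hne.
case: eqP => // h; case/negP: hne; apply/eqP/val_inj => /=; by rewrite h.
Qed.

Lemma sumV T p : \sum_(i < k.+1) V k T p i = size T + p.
Proof.
rewrite /V big_split /=; congr (_ + _).
  rewrite (eq_bigr (fun i : 'I_k.+1 => \sum_(e <- T) ((k - e.1 == i) : nat))); last first.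
    by move=> i _; rewrite countE.
  rewrite exchange_big /= -sum1_size; apply: eq_bigr => e _; exact: sum_eq1.
rewrite big_ord_recr /= eqxx mul1n big1 // => i _.
have := ltn_ord i; case: eqP => //= h; lia.
Qed.

Lemma okT_allk j T : okT k j T -> allk k T.
Proof. by move=> /andP [/allP h _]; apply/allP => e /h /andP []. Qed.

Lemma endgame_T j T p : okT k j T -> 2 ^ j <= p + WT j T -> pwin j (mkq k (V k T p)).
Proof.
elim: j T p => [|j IH] T p hT hw /=.
  rewrite (eq_bigr (fun i : 'I_k.+1 => V k T p i)); last by move=> i _; rewrite ffunE.
  rewrite sumV; move: hw; rewrite /WT (eq_bigr (fun _ => 1)); last by move=> e _; exact: Bzero.
  by rewrite sum1_size expn0 addnC.
have hY := packing (okT_Y hT); have hN := packing (okT_N hT).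
move: hw; rewrite WT_split => hw.
set pY := 2 ^ j - WT j (TY T).
have hp : pY <= p by rewrite /pY; move: hw; rewrite expnS; lia.
have hk := okT_allk hT.
exists (mkq k (AQ k T pY)); split; [|split].
- apply: legal_mkq => i hi; rewrite comp_mkq // /AQ /V; apply: leq_add.
    by apply: sub_count => e /andP [].
  by rewrite leq_mul2l hp orbT.
- have -> : Yans (mkq k (V k T p)) (mkq k (AQ k T pY)) = mkq k (V k (TY T) pY).
    by apply: state_ext => i hi; rewrite Y_vec // comp_mkq.
  apply: IH; first exact: okT_Y.
  rewrite /pY; lia.
- have -> : Nans (mkq k (V k T p)) (mkq k (AQ k T pY)) = mkq k (V k (TN T) (p - pY)).
    by apply: state_ext => i hi; rewrite N_vec // comp_mkq.
  apply: IH; first exact: okT_N.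
  move: hw; rewrite expnS /pY; lia.
Qed.

End E2.

Lemma hd_cat s1 s2 t1 t2 : size s1 = size t1 -> hd (s1 ++ s2) (t1 ++ t2) = hd s1 t1 + hd s2 t2.
Proof.
elim: s1 t1 => [|x s1 IH] [|y t1] //= [h]; by rewrite IH // addnA.
Qed.

Lemma hd_map (T0 : Type) (f g : T0 -> bool) s : hd (map f s) (map g s) = count (fun b => f b != g b) s.
Proof. by elim: s => [|x s IH] //=; rewrite IH. Qed.

Lemma hd_rep n s t : size s = size t -> hd (flatten (nseq n s)) (flatten (nseq n t)) = n * hd s t.
Proof.
move=> h; elim: n => [|n IH] //=; rewrite hd_cat // IH mulSn //.
Qed.

Lemma size_rep n (s : seq bool) : size (flatten (nseq n s)) = n * size s.
Proof. elim: n => [|n IH] //=; by rewrite size_cat IH mulSn. Qed.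

Section C.
Variable k : nat.

Definition onehot M l := mkseq (fun b => b == l) M.
Definition code M J l := flatten (nseq (2 * k + 1) (onehot M l)) ++ nseq (J - (2 * k + 1) * M) false.

Lemma size_code M J l : (2 * k + 1) * M <= J -> size (code M J l) = J.
Proof. move=> h; rewrite size_cat size_rep size_mkseq size_nseq; lia. Qed.

Lemma hd_code M J l l' : l < M -> l != l' -> 2 * k + 1 <= hd (code M J l) (code M J l').
Proof.
move=> hl hne; rewrite hd_cat; last by rewrite !size_rep !size_mkseq.
rewrite hd_rep; last by rewrite !size_mkseq.
have : 0 < hd (onehot M l) (onehot M l').
  rewrite /onehot /mkseq hd_map -has_count; apply/hasP; exists l.
    by rewrite mem_iota; lia.
  by rewrite eqxx eq_sym (negbTE hne).
move=> h; apply: leq_trans (leq_addr _ _); rewrite -{1}[2 * k + 1]muln1 leq_mul2l; lia.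
Qed.

Fixpoint Rs (f : nat -> nat) (m : nat) : seq nat :=
  if m is m'.+1 then Rs f m' ++ nseq (f m') (k - m') else [::].

Lemma sum_nseq (F : nat -> nat) n a : \sum_(r <- nseq n a) F r = n * F a.
Proof. by rewrite big_nseq iter_addn_0 mulnC. Qed.

Lemma size_Rs f m : size (Rs f m) = \sum_(i < m) f i.
Proof. elim: m => [|m IH] /=; first by rewrite big_ord0. by rewrite size_cat IH size_nseq big_ord_recr. Qed.

Lemma mem_Rs f m r : m <= k -> r \in Rs f m -> r <= k.
Proof.
elim: m => [|m IH] //= hm; rewrite mem_cat => /orP [/IH|]; first by apply; lia.
by move/nseqP => [-> _]; lia.
Qed.

Lemma count_Rs f m i : m <= k -> i <= k ->
  count (fun r => k - r == i) (Rs f m) = if i < m then f i else 0.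
Proof.
elim: m => [|m IH] //= hm hi; rewrite count_cat IH; try lia.
rewrite count_nseq; case: (ltngtP i m) => h.
- have -> : i < m.+1 by lia. have -> : (k - (k - m) == i) = false by apply/negbTE; lia. by rewrite mul0n addn0.
- have -> : i < m.+1 = false by apply/negbTE; lia. have -> : (k - (k - m) == i) = false by apply/negbTE; lia. by [].
- subst i; rewrite ltnSn add0n; have -> : k - (k - m) == m by apply/eqP; lia.
  by rewrite mul1n.
Qed.

Lemma sumB_Rs f m J : \sum_(r <- Rs f m) B J r = \sum_(i < m) f i * B J (k - i).
Proof.
elim: m => [|m IH] /=; first by rewrite big_nil big_ord0.
by rewrite big_cat IH sum_nseq big_ord_recr.
Qed.

Lemma endgame (x : lstate k) J M : \sum_(i < k) comp x i <= M -> (2 * k + 1) * M <= J ->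
  2 ^ J <= W J x -> pwin J x.
Proof.
move=> hM hJ hW.
set R := Rs (comp x) k.
set T : seq el := [seq (nth 0 R l, code M J l) | l <- iota 0 (size R)].
have hR : size R <= M by rewrite /R size_Rs.
have hRk : forall l, nth 0 R l <= k.
  move=> l; case: (ltnP l (size R)) => hl; last by rewrite nth_default.
  by apply: (@mem_Rs (comp x) k) => //; apply: mem_nth.
have hT : okT k J T.
  apply/andP; split.
    by apply/allP => e /mapP [l _ ->] /=; rewrite hRk size_code // eqxx.
  rewrite /T pairwise_map.
  apply: (@sub_in_pairwise _ (mem (iota 0 (size R))) [rel x y | x != y]).
  - move=> l l'; rewrite !mem_iota /= => hl hl' hne; rewrite /far /=.
    have hlM : l < M by lia.
    have := hd_code J hlM hne.
    have := hRk l; have := hRk l'; lia.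
  - by apply/allP.
  - by rewrite -uniq_pairwise iota_uniq.
have -> : x = mkq k (V k T (comp x k)).
  apply: state_ext => i hi; rewrite comp_mkq // /V /T count_map.
  have -> : count (preim (fun l => (nth 0 R l, code M J l)) (fun e : el => k - e.1 == i)) (iota 0 (size R))
     = count (fun r => k - r == i) R.
    by rewrite -[in RHS](mkseq_nth 0 R) /mkseq count_map.
  rewrite /R count_Rs //; case: ltnP => h.
    have hk : (i == k) = false by apply/negbTE; lia.
    by rewrite hk mul0n addn0.
  have hk : i = k by lia.
  by rewrite hk eqxx mul1n.
apply: endgame_T; first exact: hT.
move: hW; rewrite /W big_ord_recr /= subnn B0 muln1 /WT /T big_map.
have -> : \sum_(l <- iota 0 (size R)) B J (nth 0 R l) = \sum_(r <- R) B J r.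
  by rewrite -[in RHS](mkseq_nth 0 R) /mkseq big_map.
rewrite /R sumB_Rs.
have -> : \sum_(i < k) comp x (widen_ord (leqnSn k) i) * B J (k - widen_ord (leqnSn k) i)
   = \sum_(i < k) comp x i * B J (k - i) by [].
by rewrite addnC.
Qed.

End C.

Section M.
Variable k : nat.

Lemma WY_formula j (x a : lstate k) : legal x a ->
  W j (Yans x a) = \sum_(i < k.+1) comp a i * B j (k - i) +
                   \sum_(i < k) (comp x i - comp a i) * B j (k - i.+1).
Proof.
move=> hl; rewrite /W.
rewrite (eq_bigr (fun i : 'I_k.+1 => comp a i * B j (k - i) +
   (if (i : nat) is i'.+1 then comp x i' - comp a i' else 0) * B j (k - i))); last first.
  move=> [i hi] _ /=; rewrite compY //; case: i hi => [|i] hi /=; by rewrite ?mulnDl ?mul0n ?addn0.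
rewrite big_split /=; congr (_ + _).
by rewrite big_ord_recl /= mul0n add0n.
Qed.

Lemma WN_formula j (x a : lstate k) : legal x a ->
  W j (Nans x a) = \sum_(i < k.+1) (comp x i - comp a i) * B j (k - i) +
                   \sum_(i < k) comp a i * B j (k - i.+1).
Proof.
move=> hl; rewrite /W.
rewrite (eq_bigr (fun i : 'I_k.+1 => (comp x i - comp a i) * B j (k - i) +
   (if (i : nat) is i'.+1 then comp a i' else 0) * B j (k - i))); last first.
  move=> [i hi] _ /=; rewrite compN //; case: i hi => [|i] hi /=; by rewrite ?mulnDl ?mul0n ?addn0.
rewrite big_split /=; congr (_ + _).
by rewrite big_ord_recl /= mul0n add0n.
Qed.

Definition Pw j (x : lstate k) :=
  \sum_(i < k) (comp x i %/ 2 * B j (k - i) + (comp x i - comp x i %/ 2) * B j (k - i.+1)).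
Definition Qw j (x : lstate k) :=
  \sum_(i < k) ((comp x i - comp x i %/ 2) * B j (k - i) + comp x i %/ 2 * B j (k - i.+1)).

Definition qmid j (x : lstate k) : lstate k :=
  mkq k (fun i => if i < k then comp x i %/ 2 else minn (comp x k) (2 ^ j - Pw j x)).

Lemma qmid_legal j x : legal x (qmid j x).
Proof.
apply: legal_mkq => i hi; case: ifP => h; first exact: leq_div.
have -> : i = k by move/negbT: h; lia.
exact: geq_minl.
Qed.

Lemma comp_qmid_lt j x i : i < k -> comp (qmid j x) i = comp x i %/ 2.
Proof. by move=> hi; rewrite comp_mkq ?hi // ltnW. Qed.

Lemma WY_qmid j x : W j (Yans x (qmid j x)) = Pw j x + minn (comp x k) (2 ^ j - Pw j x).
Proof.
rewrite WY_formula; last exact: qmid_legal.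
rewrite big_ord_recr /= comp_mkq // ltnn subnn B0 muln1.
rewrite addnAC /Pw big_split /=; congr (_ + _ + _).
  by apply: eq_bigr => i _; rewrite comp_qmid_lt.
by apply: eq_bigr => i _; rewrite comp_qmid_lt.
Qed.

Lemma WN_qmid j x : W j (Nans x (qmid j x)) = Qw j x + (comp x k - minn (comp x k) (2 ^ j - Pw j x)).
Proof.
rewrite WN_formula; last exact: qmid_legal.
rewrite big_ord_recr /= comp_mkq // ltnn subnn B0 muln1.
rewrite addnAC /Qw big_split /=; congr (_ + _ + _).
  by apply: eq_bigr => i _; rewrite comp_qmid_lt.
by apply: eq_bigr => i _; rewrite comp_qmid_lt.
Qed.

Lemma QP j x : Qw j x <= Pw j x + \sum_(i < k) B j (k - i).
Proof.
rewrite /Qw /Pw -big_split /=; apply: leq_sum => i _.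
have hB : B j (k - i.+1) <= B j (k - i) by apply: B_monom; lia.
set X := comp x i; set B1 := B j (k - i); set B0 := B j (k - i.+1).
have hX : X - X %/ 2 = X %/ 2 + odd X by rewrite {1}(divn_eq X 2) modn2; lia.
rewrite hX; clear hX; move: (X %/ 2) (odd X) => h [] /=; rewrite !mulnDl ?mul1n ?mul0n; lia.
Qed.

Lemma PQ j x : Pw j x <= Qw j x.
Proof.
rewrite /Qw /Pw; apply: leq_sum => i _.
have hB : B j (k - i.+1) <= B j (k - i) by apply: B_monom; lia.
set X := comp x i; set B1 := B j (k - i); set B0 := B j (k - i.+1).
have hX : X - X %/ 2 = X %/ 2 + odd X by rewrite {1}(divn_eq X 2) modn2; lia.
rewrite hX; clear hX; move: (X %/ 2) (odd X) => h [] /=; rewrite !mulnDl ?mul1n ?mul0n; lia.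
Qed.

Lemma step_mid j (x : lstate k) :
  \sum_(i < k) B j (k - i) <= comp x k -> 2 ^ j.+1 <= W j.+1 x ->
  2 ^ j <= W j (Yans x (qmid j x)) /\ 2 ^ j <= W j (Nans x (qmid j x)).
Proof.
move=> hD hW.
have hc := conservation j (qmid_legal j x).
rewrite WY_qmid WN_qmid in hc *.
have hq := QP j x.
have hq2 := PQ j x.
move: hW hD hq hq2; rewrite -hc expnS; clear hc.
move: (2 ^ j) (Pw j x) (Qw j x) (comp x k) (\sum_(i < k) B j (k - i)) => T P Q X D; lia.
Qed.

Lemma child_bound j (x : lstate k) i : i < k ->
  2 * comp (Yans x (qmid j x)) i <= comp x i + (if i is i'.+1 then comp x i' + 1 else 0) + 1 /\
  2 * comp (Nans x (qmid j x)) i <= comp x i + (if i is i'.+1 then comp x i' + 1 else 0) + 1.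
Proof.
move=> hi; rewrite compY ?compN; try lia.
case: i hi => [|i] hi.
  rewrite comp_qmid_lt //; lia.
rewrite !comp_qmid_lt; lia.
Qed.

End M.

Section Ph.
Variables k q n J : nat.

Definition Inv t (x : lstate k) :=
  (forall i, i < k -> comp x i * 2 ^ t <= n * 'C(t, i) + (2 * i + 1) * 2 ^ t) /\
  2 ^ (q - t) <= W (q - t) x.

Lemma W_split j (x : lstate k) : W j x = \sum_(i < k) comp x i * B j (k - i) + comp x k.
Proof. by rewrite /W big_ord_recr /= subnn B0 muln1. Qed.

Lemma child_inv t (x y : lstate k) :
  (forall i, i < k -> comp x i * 2 ^ t <= n * 'C(t, i) + (2 * i + 1) * 2 ^ t) ->
  (forall i, i < k -> 2 * comp y i <= comp x i + (if i is i'.+1 then comp x i' + 1 else 0) + 1) ->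
  forall i, i < k -> comp y i * 2 ^ t.+1 <= n * 'C(t.+1, i) + (2 * i + 1) * 2 ^ t.+1.
Proof.
move=> hx hy i hi; have := hy i hi; have := hx i hi.
case: i hi => [|i] hi /=.
  rewrite expnS !bin0; move: (2 ^ t) => P => h1 h2.
  have h3 := leq_mul h2 (leqnn P).
  move: (comp x 0) (comp y 0) h1 h2 h3 => a b; clear => h1 h2 h3; nia.
have := hx i (ltnW hi); rewrite expnS binS; move: (2 ^ t) => P => h0 h1 h2.
have h3 := leq_mul h2 (leqnn P).
move: (comp x i) (comp x i.+1) (comp y i.+1) ('C(t, i)) ('C(t, i.+1)) h0 h1 h2 h3 => a0 a b c0 c1; clear => h0 h1 h2 h3; nia.
Qed.

Hypothesis HN1 : forall t, k <= t -> t + J < q ->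
  \sum_(i < k) (n * 'C(t, i) + (2 * i + 1) * 2 ^ t) * B (q - t) (k - i) +
  2 ^ t * \sum_(i < k) B (q - t).-1 (k - i) <= 2 ^ q.
Hypothesis HE : forall i, i < k -> n * 'C(q - J, i) < 2 ^ (q - J).
Hypothesis HJ : (2 * k + 1) * (2 * k * k) <= J.

Lemma mid d : forall t x, t + J + d = q -> k <= t -> Inv t x -> pwin (q - t) x.
Proof.
elim: d => [|d IH] t x hq hkt [hc hw].
  have -> : q - t = J by lia.
  apply: (@endgame k x J (2 * k * k)) => //; last by move: hw; have -> : q - t = J by lia.
  have hb : forall i : 'I_k, comp x i <= 2 * k.
    move=> i; have hi := ltn_ord i; have := HE hi; have := hc i hi.
    have -> : q - J = t by lia.
    move: (2 ^ t) (expn_gt0 2 t) => P hP h1 h2.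
    have h3 : comp x i * P < (2 * i + 2) * P by lia.
    rewrite ltn_pmul2r // in h3; lia.
  have : \sum_(i < k) comp x i <= \sum_(i < k) 2 * k by apply: leq_sum => i _; exact: hb i.
  rewrite sum_nat_const card_ord => h; lia.
have hj : q - t = (q - t.+1).+1 by lia.
rewrite hj /=.
set j := q - t.+1.
have hD : \sum_(i < k) B j (k - i) <= comp x k.
  have h1 := HN1 hkt (ltac:(lia) : t + J < q).
  rewrite hj /= -/j in h1.
  have h2 : 2 ^ t * 2 ^ j.+1 = 2 ^ q by rewrite -expnD; congr (_ ^ _); lia.
  move: hw; rewrite hj -/j W_split => hw.
  have h3 : 2 ^ t * \sum_(i < k) comp x i * B j.+1 (k - i) <=
            \sum_(i < k) (n * 'C(t, i) + (2 * i + 1) * 2 ^ t) * B j.+1 (k - i).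
    rewrite big_distrr /=; apply: leq_sum => i _; rewrite mulnA [2 ^ t * _]mulnC.
    by apply: leq_mul => //; apply: hc.
  have h4 := leq_mul (leqnn (2 ^ t)) hw.
  rewrite mulnDr h2 in h4.
  have h5 : 2 ^ t * \sum_(i < k) B j (k - i) <= 2 ^ t * comp x k.
    move: h1 h3 h4; move: (2 ^ t * \sum_(i < k) B j (k - i)) (2 ^ t * \sum_(i < k) comp x i * B j.+1 (k - i))
      (\sum_(i < k) (n * 'C(t, i) + (2 * i + 1) * 2 ^ t) * B j.+1 (k - i)) (2 ^ t * comp x k) (2 ^ q) => E A S X Q.
    lia.
  by rewrite leq_pmul2l ?expn_gt0 in h5.
have [hY hN] := step_mid hD (ltac:(by move: hw; rewrite hj)).
exists (qmid j x); split; first exact: qmid_legal.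
have hjj : j = q - t.+1 by [].
split.
- rewrite hjj; apply: (IH t.+1) => //; try lia.
  split; last by rewrite -hjj.
  apply: (child_inv hc) => i hi; exact: (child_bound j x hi).1.
- rewrite hjj; apply: (IH t.+1) => //; try lia.
  split; last by rewrite -hjj.
  apply: (child_inv hc) => i hi; exact: (child_bound j x hi).2.
Qed.

End Ph.

Lemma vander k q t : t <= q -> \sum_(i < k.+1) 'C(t, i) * B (q - t) (k - i) = B q k.
Proof.
elim: t => [|t IH] ht.
  rewrite big_ord_recl /= bin0 mul1n !subn0 big1 ?addn0 // => i _; by rewrite bin0n.
rewrite -IH; last by lia.
have -> : q - t = (q - t.+1).+1 by lia.
rewrite -(shift_sum k (q - t.+1) (fun i => 'C(t, i))).
apply: eq_bigr => [[i hi]] _ /=; case: i hi => [|i] hi; first by rewrite !bin0 addn0.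
by rewrite binS addnC.
Qed.

Section Z.
Variables k q m : nat.

Definition Zs t : lstate k := mkq k (fun i => m * 2 ^ (k - t) * 'C(t, i)).

Lemma Zhalf t c : t < k -> m * 2 ^ (k - t) * c = 2 * (m * 2 ^ (k - t.+1) * c).
Proof. move=> h; have -> : k - t = (k - t.+1).+1 by lia. rewrite expnS; lia. Qed.

Lemma phase0 s : forall t, t + s = k -> k <= q -> pwin (q - k) (Zs k) -> pwin (q - t) (Zs t).
Proof.
elim: s => [|s IH] t hts hkq hk; first by have -> : t = k by lia.
have htk : t < k by lia.
have -> : q - t = (q - t.+1).+1 by lia.
have hZ : forall (a : lstate k), a = mkq k (fun i => m * 2 ^ (k - t.+1) * 'C(t, i)) ->
   Yans (Zs t) a = Zs t.+1 /\ Nans (Zs t) a = Zs t.+1.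
  move=> a ->; split; apply: state_ext => i hi.
    rewrite compY // /Zs !comp_mkq //; case: i hi => [|i] hi; first by rewrite !bin0.
    rewrite !comp_mkq ?(ltnW hi) // (Zhalf _ htk) binS mulnDr.
    move: (m * 2 ^ (k - t.+1) * 'C(t, i.+1)) (m * 2 ^ (k - t.+1) * 'C(t, i)) => u v; lia.
  rewrite compN // /Zs !comp_mkq //; case: i hi => [|i] hi.
    rewrite !bin0 (Zhalf _ htk); lia.
  rewrite !comp_mkq ?(ltnW hi) // (Zhalf _ htk) binS mulnDr.
  move: (m * 2 ^ (k - t.+1) * 'C(t, i.+1)) (m * 2 ^ (k - t.+1) * 'C(t, i)) => u v; lia.
exists (mkq k (fun i => m * 2 ^ (k - t.+1) * 'C(t, i))); split.
  apply: legal_mkq => i hi; rewrite /Zs comp_mkq // (Zhalf _ htk); lia.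
have [-> ->] := hZ _ erefl.
split; apply: IH => //; lia.
Qed.

Lemma Z0 n : n = 2 ^ k * m -> Zs 0 = init_state k n.
Proof.
move=> ->; apply: state_ext => i hi; rewrite comp_mkq // comp_init // subn0.
case: i hi => [|i] hi /=; first by rewrite bin0 muln1 mulnC.
by rewrite bin0n muln0.
Qed.

Lemma Inv_Zk n : n = 2 ^ k * m -> k <= q -> 2 ^ q <= n * B q k -> Inv q n k (Zs k).
Proof.
move=> hn hkq hq; split.
  move=> i hi; rewrite /Zs comp_mkq; last exact: ltnW.
  rewrite subnn expn0 muln1 hn.
  have -> : m * 'C(k, i) * 2 ^ k = 2 ^ k * m * 'C(k, i) by rewrite mulnC mulnA.
  exact: leq_addr.
rewrite /W.
rewrite (eq_bigr (fun i : 'I_k.+1 => m * ('C(k, i) * B (q - k) (k - i)))); last first.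
  move=> i _; rewrite /Zs comp_mkq; last by have := ltn_ord i.
  by rewrite subnn expn0 muln1 mulnA.
rewrite -big_distrr /= vander //.
rewrite hn -mulnA in hq.
have e : 2 ^ q = 2 ^ k * 2 ^ (q - k) by rewrite -expnD; congr (_ ^ _); lia.
by rewrite e leq_pmul2l ?expn_gt0 in hq.
Qed.

End Z.

Lemma expn_mono a b e : a <= b -> a ^ e <= b ^ e.
Proof. move=> h; elim: e => [|e IH] //; rewrite !expnS; exact: leq_mul. Qed.

Lemma bin_le_pow x i : 'C(x, i) <= x ^ i.
Proof.
elim: x i => [|x IH] [|i] //; try by rewrite ?bin0 ?bin0n ?expn0.
rewrite binS expnS.
have h1 := IH i.+1; have h2 := IH i.
have h3 : x ^ i <= x.+1 ^ i := expn_mono i (leqnSn x).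
have h4 : x ^ i.+1 = x * x ^ i by rewrite expnS.
nia.
Qed.

Lemma bin_le_2pow x i : 'C(x, i) <= 2 ^ x.
Proof.
elim: x i => [|x IH] [|i]; rewrite ?bin0 ?bin0n ?expn_gt0 //.
rewrite binS expnS; have := IH i.+1; have := IH i; lia.
Qed.

Lemma ffact_ge n m : (n - m) ^ m <= n ^_ m.
Proof.
elim: m => [|m IH] //; rewrite ffactnSr expnSr.
apply: leq_mul; last by lia.
apply: leq_trans IH; apply: expn_mono; lia.
Qed.

Lemma bin_fact_ge n m : (n - m) ^ m <= 'C(n, m) * m`!.
Proof. by rewrite bin_ffact ffact_ge. Qed.

Lemma B_le_pow x k : B x k <= x.+1 ^ k.
Proof.
elim: k => [|k IH]; first by rewrite B0.
rewrite B_S expnS.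
have h1 := bin_le_pow x k.+1; have h2 : x ^ k <= x.+1 ^ k := expn_mono k (leqnSn x).
rewrite expnS in h1; nia.
Qed.

Lemma bin_le_B x k : 'C(x, k) <= B x k.
Proof. case: k => [|k]; first by rewrite B0 bin0. by rewrite B_S leq_addl. Qed.

Lemma ev c m : exists N, forall x, N <= x -> c * x.+1 ^ m <= 2 ^ x.
Proof.
exists (maxn (2 * m + 3) (c * 2 ^ m.+1 * m.+1`!)) => x hx.
have hx1 : 2 * m + 3 <= x by move: hx; rewrite geq_max => /andP [].
have hx2 : c * 2 ^ m.+1 * m.+1`! <= x.+1.
  by move: hx; rewrite geq_max => /andP [_ h]; lia.
set D := 2 ^ m.+1 * m.+1`!.
have hD : 0 < D by rewrite muln_gt0 expn_gt0 fact_gt0.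
rewrite -(leq_pmul2r hD).
have e1 : x.+1 ^ m.+1 <= 2 ^ m.+1 * (x - m.+1) ^ m.+1.
  rewrite -expnMn; apply: expn_mono; lia.
have e2 : (x - m.+1) ^ m.+1 <= 'C(x, m.+1) * m.+1`! := bin_fact_ge x m.+1.
have e3 : 'C(x, m.+1) <= 2 ^ x := bin_le_2pow x m.+1.
have e4 : c * x.+1 ^ m * D <= x.+1 ^ m.+1.
  have -> : c * x.+1 ^ m * D = x.+1 ^ m * (c * D) by rewrite mulnAC mulnC mulnA.
  rewrite expnSr; apply: leq_mul => //; by rewrite /D mulnA.
apply: leq_trans e4 _; apply: leq_trans e1 _; rewrite /D mulnCA leq_pmul2l ?expn_gt0 //.
apply: leq_trans e2 _; exact: leq_mul.
Qed.

Lemma nbounds k q : let n := 2 ^ k * (2 ^ q %/ (2 ^ k * B q k) + 1) in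
  2 ^ q < n * B q k /\ n * B q k <= 2 ^ q + 2 ^ k * B q k.
Proof.
move=> n; set D := 2 ^ k * B q k.
have hD : 0 < D by rewrite muln_gt0 expn_gt0 B_ge1.
have e : n * B q k = D * (2 ^ q %/ D) + D.
  rewrite /n /D; move: (2 ^ q %/ (2 ^ k * B q k)) (2 ^ k) (B q k) => Q a b; nia.
rewrite e; have := divn_eq (2 ^ q) D; have := ltn_pmod (2 ^ q) hD.
move: (2 ^ q %/ D) (2 ^ q %% D) (2 ^ q) => a b c. nia.
Qed.

Section Star.
Variables k q t j J : nat.
Let K := 2 * k * k + k.
Let g := 4 ^ k * k`!.
Let beta := B q k.

Hypothesis hkt : k <= t.
Hypothesis htj : t + j = q.
Hypothesis hJj : J <= j.
Hypothesis h4k : 4 * k <= q.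
Hypothesis c1 : ((2 ^ k + K) * (q.+1 ^ k * q.+1 ^ k)) ^ 2 <= 2 ^ q.
Hypothesis c2 : 2 ^ k.+1 * g * q.+1 ^ k <= 2 ^ q.
Hypothesis c3 : 2 * K * g * j.+1 ^ k <= 2 ^ j.

Lemma star : 2 ^ k * (beta * beta) + 2 ^ t * K * B j k * beta <= 2 ^ q * 'C(t, k).
Proof.
have hb : beta <= q.+1 ^ k by exact: B_le_pow.
have hC : 1 <= 'C(t, k) by rewrite bin_gt0.
have e2 : 2 ^ q = 2 ^ t * 2 ^ j by rewrite -expnD htj.
case: (leqP t j) => htj2.
  have hBj : B j k <= q.+1 ^ k by apply: leq_trans (B_le_pow j k) _; apply: expn_mono; lia.
  have hq2 : 2 ^ q <= (2 ^ j) ^ 2 by rewrite -expnM; apply: leq_pexp2l => //; lia.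
  have hc : (2 ^ k + K) * (q.+1 ^ k * q.+1 ^ k) <= 2 ^ j by rewrite -leq_sqr; apply: leq_trans c1 hq2.
  have hkt2 : 2 ^ k <= 2 ^ t by apply: leq_pexp2l.
  have ha : 1 <= 2 ^ k by rewrite expn_gt0.
  move: hc hkt2 hb hBj hC ha; rewrite e2.
  move: (2 ^ k) (2 ^ t) (2 ^ j) (q.+1 ^ k) ('C(t, k)) (B j k) => a b c P C Bj.
  move=> hc hkt2 hb hBj hC ha.
  have h1 : a * (beta * beta) <= b * (P * P) by apply: leq_mul => //; apply: leq_mul.
  have h2 : b * K * (Bj * beta) <= b * K * (P * P) := leq_mul (leqnn _) (leq_mul hBj hb).
  have h3 : b * ((a + K) * (P * P)) <= b * c := leq_mul (leqnn _) hc.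
  have h4 : b * c * 1 <= b * c * C := leq_mul (leqnn _) hC.
  have h5 : b * (P * P) * 1 <= b * (P * P) * a := leq_mul (leqnn _) ha.
  move: h1 h2 h3 h4 h5; clear; move: K beta => K' be h1 h2 h3 h4 h5.
  nia.
have hbg : beta <= g * 'C(t, k).
  apply: (leq_trans hb); apply: (@leq_trans ((4 * (t - k)) ^ k)); first by apply: expn_mono; lia.
  by rewrite expnMn /g -mulnA leq_mul2l [k`! * _]mulnC bin_fact_ge orbT.
have hBj : B j k <= j.+1 ^ k := B_le_pow j k.
have p1 : 2 * (2 ^ k * (beta * beta)) <= 2 ^ q * 'C(t, k).
  apply: (leq_trans _ (leq_mul c2 (leqnn 'C(t, k)))); rewrite expnS.
  move: (2 ^ k) (q.+1 ^ k) ('C(t, k)) hb hbg => a P C hb' hbg'.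
  have := leq_mul (leq_mul (leqnn (2 * a)) hb') hbg'. 
  move: g beta => g' be; nia.
have p2 : 2 * (2 ^ t * K * B j k * beta) <= 2 ^ q * 'C(t, k).
  rewrite e2; have := leq_mul (leqnn (2 ^ t)) (leq_mul c3 (leqnn 'C(t, k))).
  move: (2 ^ t) (2 ^ j) (B j k) (j.+1 ^ k) ('C(t, k)) hBj hbg => b c Bj R C hBj' hbg'.
  have := leq_mul (leq_mul (leqnn (2 * b * K)) hBj') hbg'.
  move: g beta K => g' be K'; nia.
lia.
Qed.

End Star.

Lemma HN1_ok k q n J :
  2 ^ q <= n * B q k -> n * B q k <= 2 ^ q + 2 ^ k * B q k -> 4 * k <= q ->
  ((2 ^ k + (2 * k * k + k)) * (q.+1 ^ k * q.+1 ^ k)) ^ 2 <= 2 ^ q ->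
  2 ^ k.+1 * (4 ^ k * k`!) * q.+1 ^ k <= 2 ^ q ->
  (forall j, J <= j -> 2 * (2 * k * k + k) * (4 ^ k * k`!) * j.+1 ^ k <= 2 ^ j) ->
  forall t, k <= t -> t + J < q ->
  \sum_(i < k) (n * 'C(t, i) + (2 * i + 1) * 2 ^ t) * B (q - t) (k - i) +
  2 ^ t * \sum_(i < k) B (q - t).-1 (k - i) <= 2 ^ q.
Proof.
move=> hn1 hn2 h4k c1 c2 c3 t hkt htJ.
set j := q - t.
have htj : t + j = q by rewrite /j; lia.
have hst := star hkt htj (ltac:(rewrite /j; lia) : J <= j) h4k c1 c2 (c3 j (ltac:(rewrite /j; lia))).
have s1 : \sum_(i < k) (n * 'C(t, i) + (2 * i + 1) * 2 ^ t) * B j (k - i) =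
   n * \sum_(i < k) 'C(t, i) * B j (k - i) + 2 ^ t * \sum_(i < k) (2 * i + 1) * B j (k - i).
  rewrite !big_distrr -big_split /=; apply: eq_bigr => i _; rewrite mulnDl !mulnA; congr (_ + _).
  by rewrite [2 ^ t * _]mulnC.
have s2 : \sum_(i < k) (2 * i + 1) * B j (k - i) <= k * (2 * k * B j k).
  rewrite -[k in k * _]card_ord -sum_nat_const; apply: leq_sum => i _.
  apply: leq_mul; first by have := ltn_ord i; lia.
  apply: B_monom; lia.
have s3 : \sum_(i < k) B j.-1 (k - i) <= k * B j k.
  rewrite -[k in k * _]card_ord -sum_nat_const; apply: leq_sum => i _.
  apply: (@leq_trans (B j (k - i))); first by apply: B_monoj; lia.
  apply: B_monom; lia.
have s4 : \sum_(i < k) 'C(t, i) * B j (k - i) + 'C(t, k) = B q k.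
  rewrite -(vander k (t:=t)) ?big_ord_recr /=; last by lia.
  by rewrite subnn B0 muln1.
rewrite s1.
have hC : n * B q k * 'C(t, k) >= 2 ^ q * 'C(t, k) := leq_mul hn1 (leqnn _).
have hb1 : 1 <= B q k := B_ge1 q k.
move: hst hC s2 s3 s4 hn2 hb1.
move: (\sum_(i < k) 'C(t, i) * B j (k - i)) (\sum_(i < k) (2 * i + 1) * B j (k - i))
  (\sum_(i < k) B j.-1 (k - i)) (B j k) ('C(t, k)) (B q k) (2 ^ q) (2 ^ t) (2 ^ k) =>
  S1 S2 S3 Bj C be Q T E hst hC s2 s3 s4 hn2 hb1.
have key : E * be + T * (2 * k * k + k) * Bj <= n * C.
  rewrite -(leq_pmul2l hb1).
  have e1 : be * (E * be + T * (2 * k * k + k) * Bj) = E * (be * be) + T * (2 * k * k + k) * Bj * be by nia.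
  have e2 : be * (n * C) = n * be * C by nia.
  rewrite e1 e2; exact: leq_trans hst hC.
nia.
Qed.

Lemma HE_ok k q n J :
  n * B q k <= 2 ^ q + 2 ^ k * B q k -> J <= q -> 2 * k + 1 <= q ->
  2 ^ (J + k + 1) * k`! <= q.+1 -> 2 ^ (k + J + 2) * q.+1 ^ k <= 2 ^ q ->
  forall i, i < k -> n * 'C(q - J, i) < 2 ^ (q - J).
Proof.
move=> hn2 hJq h2k c4 c5 i hik.
set t := q - J.
have e2 : 2 ^ q = 2 ^ t * 2 ^ J by rewrite -expnD /t; congr (_ ^ _); lia.
have hCi : 'C(t, i) <= q.+1 ^ k.-1.
  apply: leq_trans (bin_le_pow t i) _; apply: (@leq_trans (q.+1 ^ i)).
    apply: expn_mono; rewrite /t; lia.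
  apply: leq_pexp2l => //; lia.
have hk1 : q.+1 ^ k = q.+1 * q.+1 ^ k.-1 by rewrite -expnS; congr (_ ^ _); lia.
have hP : 0 < 2 ^ k * k`! by rewrite muln_gt0 expn_gt0 fact_gt0.
have i1 : 2 * 2 ^ J * 'C(t, i) <= B q k.
  rewrite -(leq_pmul2l hP).
  have a1 : 2 ^ k * k`! * (2 * 2 ^ J * 'C(t, i)) <= 2 ^ (J + k + 1) * k`! * q.+1 ^ k.-1.
    have -> : 2 ^ (J + k + 1) = 2 ^ k * (2 * 2 ^ J) by rewrite !expnD expn1; move: (2 ^ J) (2 ^ k) => x y; nia.
    move: (2 ^ k) (k`!) (2 * 2 ^ J) ('C(t, i)) (q.+1 ^ k.-1) hCi => a b c d e h.
    have := leq_mul (leqnn (a * b * c)) h; nia.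
  apply: leq_trans a1 _.
  apply: (@leq_trans (q.+1 ^ k)); first by rewrite hk1 leq_mul2r c4 orbT.
  apply: (@leq_trans ((2 * (q - k)) ^ k)); first by apply: expn_mono; lia.
  rewrite expnMn -mulnA leq_mul2l; apply/orP; right.
  apply: leq_trans (bin_fact_ge q k) _; by rewrite mulnC leq_mul2l bin_le_B orbT.
have i2 : 4 * 2 ^ k * 'C(t, i) <= 2 ^ t.
  rewrite -(leq_pmul2r (expn_gt0 2 J)) -e2.
  apply: leq_trans _ c5.
  have -> : 2 ^ (k + J + 2) = 4 * 2 ^ k * 2 ^ J by rewrite !expnD; move: (2 ^ J) (2 ^ k) => x y; nia.
  have h3 : q.+1 ^ k.-1 <= q.+1 ^ k by apply: leq_pexp2l => //; lia.
  move: (2 ^ k) (2 ^ J) ('C(t, i)) (q.+1 ^ k.-1) (q.+1 ^ k) hCi h3 => a b c d e h h'.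
  have := leq_mul (leqnn (4 * a * b)) (leq_trans h h'); nia.
have hb1 : 1 <= B q k := B_ge1 q k.
have ht1 : 1 <= 2 ^ t by rewrite expn_gt0.
rewrite e2 in hn2.
move: hn2 i1 i2 hb1 ht1; move: (B q k) (2 ^ t) (2 ^ J) (2 ^ k) ('C(t, i)) => be T G E C.
move=> hn2 i1 i2 hb1 ht1.
have f1 := leq_mul hn2 (leqnn C).
have f2 := leq_mul (leqnn T) i1.
have f3 := leq_mul i2 (leqnn be).
have : n * C * be < T * be by nia.
rewrite ltn_pmul2r //.
Qed.

Lemma min_exists (P : nat -> Prop) m : P m -> exists n, n <= m /\ P n /\ forall m', m' < n -> ~ P m'.
Proof.
elim/ltn_ind: m => m IH hm.
case: (classic (exists m', m' < m /\ P m')) => [[m' [hlt hP]]|hno].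
  have [n [hn [hPn hmin]]] := IH m' hlt hP.
  exists n; split => //; exact: leq_trans hn (ltnW hlt).
exists m; split => //; split => // m' hm' hP; apply: hno; by exists m'.
Qed.

Lemma upper k : exists qk, forall q, qk <= q ->
  pwin q (init_state k (2 ^ k * (2 ^ q %/ (2 ^ k * B q k) + 1))).
Proof.
set K := 2 * k * k + k.
set g := 4 ^ k * k`!.
have [N3 hN3] := ev (2 * K * g) k.
set J := maxn N3 ((2 * k + 1) * (2 * k * k)).
have [N1 hN1] := ev ((2 ^ k + K) ^ 2) (4 * k).
have [N2 hN2] := ev (2 ^ k.+1 * g) k.
have [N5 hN5] := ev (2 ^ (k + J + 2)) k.
exists (maxn (maxn (maxn N1 N2) (maxn N5 (2 ^ (J + k + 1) * k`!))) (maxn (4 * k + 1) (J + k + 1))).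
move=> q; rewrite !geq_max => /andP [/andP [/andP [hq1 hq2] /andP [hq5 hq4]] /andP [hq6 hq7]].
set m0 := 2 ^ q %/ (2 ^ k * B q k) + 1.
set n0 := 2 ^ k * m0.
have [hnb1 hnb2] := nbounds k q.
rewrite -/m0 -/n0 in hnb1 hnb2.
have hJ : (2 * k + 1) * (2 * k * k) <= J by rewrite /J leq_maxr.
have c1 : ((2 ^ k + K) * (q.+1 ^ k * q.+1 ^ k)) ^ 2 <= 2 ^ q.
  have := hN1 q hq1.
  by rewrite expnMn -expnD -expnM; congr (_ * _ ^ _ <= _); lia.
have c2 := hN2 q hq2.
have c3 : forall j, J <= j -> 2 * K * g * j.+1 ^ k <= 2 ^ j.
  move=> j hj; apply: hN3; apply: leq_trans hj; exact: leq_maxl.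
have c5 := hN5 q hq5.
have HN1 := HN1_ok (ltnW hnb1) hnb2 (ltac:(lia) : 4 * k <= q) c1 c2 c3.
have HE := HE_ok hnb2 (ltac:(lia) : J <= q) (ltac:(lia) : 2 * k + 1 <= q) (ltac:(lia)) c5.
have hinv := @Inv_Zk k q m0 n0 erefl (ltac:(lia)) (ltnW hnb1).
have hmid := @mid k q n0 J HN1 HE hJ (q - J - k) k (Zs k m0 k) (ltac:(lia)) (leqnn k) hinv.
have := @phase0 k q m0 k 0 (ltac:(lia)) (ltac:(lia)) hmid.
by rewrite subn0 (Z0 (n:=n0)).
Qed.

Import Order.TTheory GRing.Theory Num.Theory.
Local Open Scope ring_scope.

Theorem theorem3 (k : nat) :
  exists (qk : nat) (Ck : rat), forall q : nat, (qk <= q)%N ->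
    exists n : nat, is_Fstar k q n /\
      ((2 ^ q)%:R / (binom_le q k)%:R <= n%:R :> rat) /\
      (n%:R <= (2 ^ q)%:R / (binom_le q k)%:R + Ck :> rat).
Proof.
have [qk hqk] := upper k.
exists qk, (2 ^ k)%:R => q hq.
have hw := hqk q hq.
have [n [hn [hP hmin]]] := @min_exists (fun m => pwin q (init_state k m)) _ hw.
exists n; split; first by split.
have hlb := lower_bound hP; rewrite W_init in hlb.
have hb : (0 < (binom_le q k)%:R :> rat) by rewrite ltr0n B_ge1.
have [_ hnb2] := nbounds k q.
split.
  by rewrite ler_pdivrMr // -natrM ler_nat.
rewrite -lerBlDr ler_pdivlMr // mulrBl -!natrM lerBlDr -natrD ler_nat.
apply: leq_trans hnb2; exact: leq_mul.
Qed.
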